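(* Each of the three 2-arc matrix factorizations $\widehat{\gamma}\in\{\widehat{\gamma}_{\mathrm{par}},\widehat{\gamma}_{\mathrm{vir}},\widehat{\gamma}_{\mathrm{hor}}\}$ of $W_4$ over $R$ is isomorphic to $K_{\mathrm{cmn}}\otimes_R\widetilde{\gamma}_{\mathrm p}$, where $\widetilde{\gamma}_{\mathrm p}=R\otimes_{R_{\mathrm p}}\widehat{\gamma}_{\mathrm p}$ is the base change along $\phi_{\mathrm p}$ of the corresponding proper matrix factorization, and $K_{\mathrm{cmn}}$ is the Koszul matrix factorization with rows $(x_1+x_2+x_3+x_4\mid A(\mathbf x,\mathbf y))$ and $(y_1+y_2+y_3+y_4\mid B(\mathbf x,\mathbf y))$, with \[ A=-(y_3+y_4)(y_1+y_2+y_4)-y_1y_2+w(-x_1,x_3)+(x_2+x_4)\,w(x_1,x_2,-x_3)-(x_2+x_4)(x_1+x_4)\big(w(x_1,-x_1,x_2,x_4)+w(x_1,-x_1,-x_2,x_4)\big), \] \[ B=x_1y_1+x_2y_2+x_3y_3-x_4y_4 . \]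
   Context: Fix $N\ge1$, $w(x)=x^{2N+1}$, $W(x,y)=xy^2+x^{2N+1}$, and iterated divided differences $w(x_1,\dots,x_{n-1},x_n)=\frac{w(x_1,\dots,x_{n-2},x_{n-1})-w(x_1,\dots,x_{n-2},x_n)}{x_{n-1}-x_n}$ (symmetric polynomials). Let $R=\mathbb{Q}[x_1,\dots,x_4,y_1,\dots,y_4]$, $q$-graded by $\deg x_i=2$, $\deg y_i=2N$, and $W_4=\sum_{i=1}^4W(x_i,y_i)$. A matrix factorization of $V$ over a ring $R$ is a $\mathbb{Z}/2$-graded free module with odd endomorphism $D$, $D^2=V\cdot\mathrm{id}$. For $a_i,b_i\in R$ with $\sum a_ib_i=V$, the Koszul matrix factorization with rows $(a_i\mid b_i)$ is the tensor product over $R$ of the rank-$(1,1)$ factorizations $Re_0\oplus Re_1$, $De_0=b_ie_1$, $De_1=a_ie_0$ ($e_0$ even, $e_1$ odd). The 1-arc factorization $A(i,j)$ is the Koszul matrix factorization with rows $(y_j+y_i\mid x_j(y_j-y_i))$, $(x_j+x_i\mid y_i^2+w(-x_i,x_j))$. Set $\widehat{\gamma}_{\mathrm{par}}=A(1,3)\otimes A(2,4)$, $\widehat{\gamma}_{\mathrm{vir}}=A(1,4)\otimes A(2,3)$, $\widehat{\gamma}_{\mathrm{hor}}=A(1,2)\otimes A(3,4)$ (tensor products over $\mathbb{Q}$, giving matrix factorizations of $W_4$ over $R$). Let $R_{\mathrm p}=\mathbb{Q}[p_1,p_2,q_1,q_2,r_1,r_2,C]$ and $W_{4,\mathrm p}=p_1q_2r_2+q_1p_2r_2+r_1p_2q_2+p_1q_1r_1C$.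 The proper matrix factorizations of $W_{4,\mathrm p}$ are the Koszul matrix factorizations: $\widehat{\gamma}_{\mathrm{par,p}}$ with rows $(p_1\mid q_2r_2+q_1r_1C)$, $(p_2\mid q_2r_1+q_1r_2)$; $\widehat{\gamma}_{\mathrm{vir,p}}$ with rows $(r_1\mid p_2q_2+p_1q_1C)$, $(r_2\mid p_1q_2+p_2q_1)$; $\widehat{\gamma}_{\mathrm{hor,p}}$ with rows $(q_1\mid p_2r_2+p_1r_1C)$, $(q_2\mid p_1r_2+p_2r_1)$. The ring homomorphism $\phi_{\mathrm p}:R_{\mathrm p}\to R$ is $p_1\mapsto x_2+x_4$, $q_1\mapsto x_3+x_4$, $r_1\mapsto x_1+x_4$, $p_2\mapsto y_2+y_4$, $q_2\mapsto y_3+y_4$, $r_2\mapsto y_1+y_4$, $C\mapsto \tilde C(\mathbf x)=w(x_1,x_2,-x_3,x_4)+w(x_1,-x_1,x_2,x_4)+w(x_1,-x_1,-x_2,x_4)$. *)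

(* Defs.v *)
From HB Require Import structures.
From mathcomp Require Import all_boot all_order all_algebra.
From mathcomp Require Import mpoly.
Set Implicit Arguments. Unset Strict Implicit. Unset Printing Implicit Defensive.
Import Order.TTheory GRing.Theory Num.Theory.
Local Open Scope ring_scope.

(* A Z/2-graded free S-module with a finite basis mfI, parity of basis
   elements mfpar (true = odd), and an endomorphism D given by its matrix:
   mfD t s = coefficient of basis vector e_t in D(e_s). *)
Record mfd (S : comNzRingType) := MFD {
  mfI : finType;
  mfpar : mfI -> bool;
  mfD : mfI -> mfI -> S }.
Arguments mfI {S} m.
Arguments mfpar {S} m _.
Arguments mfD {S} m _ _.

Definition is_mf (S : comNzRingType) (V : S) (M : mfd S) : Prop :=
  (forall t s, mfpar M t = mfpar M s -> mfD M t s = 0) /\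
  (forall t s, \sum_(k : mfI M) mfD M t k * mfD M k s = (t == s)%:R * V).

Definition mf_unit (S : comNzRingType) : mfd S :=
  @MFD S unit (fun _ => false) (fun _ _ => 0).

(* rank (1,1) factorization  S e0 + S e1,  D e0 = b e1, D e1 = a e0
   (e0 = false even, e1 = true odd) *)
Definition mf_rank1 (S : comNzRingType) (a b : S) : mfd S :=
  @MFD S bool (fun s => s)
    (fun t s => if s then (if t then 0 else a) else (if t then b else 0)).

(* graded tensor product over S:
   D (u (x) v) = D u (x) v + (-1)^|u| u (x) D v *)
Definition mf_tensor (S : comNzRingType) (M N : mfd S) : mfd S :=
  @MFD S (mfI M * mfI N)%type
    (fun ij => mfpar M ij.1 (+) mfpar N ij.2)
    (fun t s => mfD M t.1 s.1 * (t.2 == s.2)%:R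
              + (t.1 == s.1)%:R * (-1) ^+ mfpar M s.1 * mfD N t.2 s.2).

Fixpoint koszul (S : comNzRingType) (rows : seq (S * S)) : mfd S :=
  match rows with
  | [::] => mf_unit S
  | r :: rs => mf_tensor (mf_rank1 r.1 r.2) (koszul rs)
  end.

Definition mf_base_change (S T : comNzRingType) (f : S -> T) (M : mfd S) : mfd T :=
  @MFD T (mfI M) (mfpar M) (fun t s => f (mfD M t s)).

Definition mf_iso (S : comNzRingType) (M N : mfd S) : Prop :=
  exists (P : mfI N -> mfI M -> S) (Q : mfI M -> mfI N -> S),
    [/\ (forall j i, mfpar N j != mfpar M i -> P j i = 0 /\ Q i j = 0),
        (forall j j', \sum_(i : mfI M) P j i * Q i j' = (j == j')%:R),
        (forall i i', \sum_(j : mfI N) Q i j * P j i' = (i == i')%:R) &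
        (forall j i, \sum_(k : mfI M) P j k * mfD M k i
                   = \sum_(k : mfI N) mfD N j k * P k i)].

Fixpoint hsym (S : comNzRingType) (k : nat) (xs : seq S) : S :=
  match xs with
  | [::] => (k == 0)%:R
  | x :: xs' => \sum_(j < k.+1) x ^+ j * hsym (k - j) xs'
  end.

(* w(x_1,...,x_n) = iterated divided difference of x^(2N+1)
                  = h_{2N+2-n}(x_1,...,x_n)   (n <= 2N+2) *)
Definition wdd (S : comNzRingType) (N : nat) (xs : seq S) : S :=
  hsym (2 * N + 2 - size xs) xs.

Definition Rr := {mpoly rat[8]}.
Definition Rp := {mpoly rat[7]}.

Definition xv (i : nat) : Rr := 'X_(@inord 7 i.-1).
Definition yv (i : nat) : Rr := 'X_(@inord 7 (i + 3)).

Definition p1 : Rp := 'X_(@inord 6 0).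
Definition p2 : Rp := 'X_(@inord 6 1).
Definition q1 : Rp := 'X_(@inord 6 2).
Definition q2 : Rp := 'X_(@inord 6 3).
Definition r1 : Rp := 'X_(@inord 6 4).
Definition r2 : Rp := 'X_(@inord 6 5).
Definition Cv : Rp := 'X_(@inord 6 6).

Definition W_pot (N : nat) (x y : Rr) : Rr := x * y ^+ 2 + x ^+ (2 * N + 1).
Definition W4 (N : nat) : Rr := \sum_(1 <= i < 5) W_pot N (xv i) (yv i).
Definition W4p : Rp := p1 * q2 * r2 + q1 * p2 * r2 + r1 * p2 * q2 + p1 * q1 * r1 * Cv.

Definition arcA (N : nat) (i j : nat) : mfd Rr :=
  koszul [:: (yv j + yv i, xv j * (yv j - yv i));
             (xv j + xv i, yv i ^+ 2 + wdd N [:: - xv i; xv j])].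

Definition gam_par (N : nat) := mf_tensor (arcA N 1 3) (arcA N 2 4).
Definition gam_vir (N : nat) := mf_tensor (arcA N 1 4) (arcA N 2 3).
Definition gam_hor (N : nat) := mf_tensor (arcA N 1 2) (arcA N 3 4).

Definition gam_par_p : mfd Rp :=
  koszul [:: (p1, q2 * r2 + q1 * r1 * Cv); (p2, q2 * r1 + q1 * r2)].
Definition gam_vir_p : mfd Rp :=
  koszul [:: (r1, p2 * q2 + p1 * q1 * Cv); (r2, p1 * q2 + p2 * q1)].
Definition gam_hor_p : mfd Rp :=
  koszul [:: (q1, p2 * r2 + p1 * r1 * Cv); (q2, p1 * r2 + p2 * r1)].

Definition Ctilde (N : nat) : Rr :=
  wdd N [:: xv 1; xv 2; - xv 3; xv 4]
  + wdd N [:: xv 1; - xv 1; xv 2; xv 4]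
  + wdd N [:: xv 1; - xv 1; - xv 2; xv 4].

Definition phi_p (N : nat) (f : Rp) : Rr :=
  comp_mpoly [tuple xv 2 + xv 4; yv 2 + yv 4; xv 3 + xv 4; yv 3 + yv 4;
                    xv 1 + xv 4; yv 1 + yv 4; Ctilde N] f.

Definition tilde (N : nat) (M : mfd Rp) : mfd Rr := mf_base_change (phi_p N) M.

Definition Acmn (N : nat) : Rr :=
  - (yv 3 + yv 4) * (yv 1 + yv 2 + yv 4) - yv 1 * yv 2
  + wdd N [:: - xv 1; xv 3]
  + (xv 2 + xv 4) * wdd N [:: xv 1; xv 2; - xv 3]
  - (xv 2 + xv 4) * (xv 1 + xv 4)
      * (wdd N [:: xv 1; - xv 1; xv 2; xv 4] + wdd N [:: xv 1; - xv 1; - xv 2; xv 4]).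

Definition Bcmn : Rr := xv 1 * yv 1 + xv 2 * yv 2 + xv 3 * yv 3 - xv 4 * yv 4.

Definition Kcmn (N : nat) : mfd Rr :=
  koszul [:: (xv 1 + xv 2 + xv 3 + xv 4, Acmn N); (yv 1 + yv 2 + yv 3 + yv 4, Bcmn)].

(* Main.v *)
From Pilot Require Import Defs.
From HB Require Import structures.
From mathcomp Require Import all_boot all_order all_algebra.
From mathcomp Require Import mpoly.
From mathcomp Require Import ring zify.
Import Pilot.Defs.
From Stdlib Require Import FunctionalExtensionality.
Set Implicit Arguments. Unset Strict Implicit. Unset Printing Implicit Defensive.
Import Order.TTheory GRing.Theory Num.Theory.
Local Open Scope ring_scope.

Notation Idx := ((bool * (bool * unit)) * (bool * (bool * unit)))%type.

Lemma sum_unit (S : comNzRingType) (F : unit -> S) : \sum_(i : unit) F i = F tt.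
Proof. by rewrite (big_pred1 tt) // => -[]. Qed.

Lemma sum4 (S : comNzRingType) (F : bool * (bool * unit) -> S) :
  \sum_(k : bool * (bool * unit)) F k = \sum_(k1 : bool) \sum_(k2 : bool) F (k1,(k2,tt)).
Proof.
rewrite (eq_bigr (fun p => F (p.1, p.2))); last by case.
rewrite -(pair_bigA _ (fun i j => F (i, j))) /=; apply: eq_bigr => k1 _.
rewrite (eq_bigr (fun p => F (k1, (p.1, p.2)))); last by case.
by rewrite -(pair_bigA _ (fun i j => F (k1, (i, j)))) /=; apply: eq_bigr => k2 _; rewrite sum_unit.
Qed.

Lemma sum16 (S : comNzRingType) (F : Idx -> S) :
  \sum_(k : Idx) F k =
  \sum_(k1 : bool) \sum_(k2 : bool) \sum_(k3 : bool) \sum_(k4 : bool)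
     F ((k1,(k2,tt)),(k3,(k4,tt))).
Proof.
rewrite (eq_bigr (fun p => F (p.1, p.2))); last by case.
rewrite -(pair_bigA _ (fun i j => F (i, j))) /= sum4; apply: eq_bigr => k1 _; apply: eq_bigr => k2 _.
by rewrite sum4.
Qed.

Section HS.
Variable S : comNzRingType.
Implicit Types (a b x : S) (l : seq S).

Lemma hsym0c x l : hsym 0 (x :: l) = hsym 0 l.
Proof. by rewrite /= big_ord1 expr0 mul1r. Qed.

Lemma hsym_rec k x l : hsym k.+1 (x :: l) = hsym k.+1 l + x * hsym k (x :: l).
Proof.
rewrite /= big_ord_recl /= expr0 mul1r subn0; congr (_ + _).
rewrite big_distrr /=; apply: eq_bigr => j _.
by rewrite /bump /= add1n subSS exprS mulrA.
Qed.

Lemma hsym_dd k a b l :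
  hsym k.+1 (a :: l) - hsym k.+1 (b :: l) = (a - b) * hsym k (a :: b :: l).
Proof.
elim: k => [|k IH].
  rewrite !hsym_rec !hsym0c; ring.
rewrite hsym_rec [hsym k.+2 (b :: l)]hsym_rec.
rewrite [hsym k.+1 (a :: b :: l)]hsym_rec.
have -> : (a - b) * (hsym k.+1 (b :: l) + a * hsym k (a :: b :: l))
  = (a - b) * hsym k.+1 (b :: l) + a * ((a - b) * hsym k (a :: b :: l)) by ring.
rewrite -IH; ring.
Qed.

Lemma hsym_swap k a b l : hsym k (a :: b :: l) = hsym k (b :: a :: l).
Proof.
elim: k => [|k IH]; first by rewrite !hsym0c.
rewrite hsym_rec [hsym k.+1 (b :: a :: l)]hsym_rec -IH.
apply/eqP; rewrite -subr_eq0; apply/eqP.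
have -> : hsym k.+1 (b :: l) + a * hsym k (a :: b :: l) -
  (hsym k.+1 (a :: l) + b * hsym k (a :: b :: l))
  = - ((hsym k.+1 (a :: l) - hsym k.+1 (b :: l)) - (a - b) * hsym k (a :: b :: l)) by ring.
by rewrite hsym_dd subrr oppr0.
Qed.

Lemma hsym_cons x l l' : (forall k, hsym k l = hsym k l') -> forall k, hsym k (x :: l) = hsym k (x :: l').
Proof. by move=> H k /=; apply: eq_bigr => j _; rewrite H. Qed.

Lemma hsym_move x p1 p2 k : hsym k (p1 ++ x :: p2) = hsym k (x :: p1 ++ p2).
Proof.
elim: p1 k => [|y p1 IH] k //.
by rewrite cat_cons (@hsym_cons y _ _ IH) hsym_swap.
Qed.

Lemma hsym_perm l l' : perm_eq l l' -> forall k, hsym k l = hsym k l'.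
Proof.
elim: l l' => [|x l IH] l'.
  by move=> /perm_size /esym /size0nil ->.
move=> Hp.
have Hx : x \in l' by rewrite -(perm_mem Hp) mem_head.
move: Hp; case/splitPr: Hx => p1 p2 Hp.
move=> k; rewrite hsym_move; apply: hsym_cons; apply: IH.
by rewrite -(perm_cons x) (perm_trans Hp) // -cat1s perm_catCA.
Qed.

Lemma hsym_odd l k : hsym k (map -%R l) = (-1) ^+ k * hsym k l.
Proof.
elim: l k => [|x l IH] k /=.
  by case: k => [|k] /=; rewrite ?expr0 ?mul1r ?mulr0.
rewrite big_distrr /=; apply: eq_bigr => j _.
rewrite IH [(- x) ^+ _]exprNn.
have -> : (-1) ^+ k = (-1) ^+ j * (-1) ^+ (k - j) :> S.
  by rewrite -exprD subnKC // -ltnS ltn_ord.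
by rewrite mulrACA.
Qed.

End HS.

Lemma wdd_dd (S : comNzRingType) N a b (l : seq S) : (size l + 2 <= 2 * N + 2)%N ->
  wdd N (a :: l) - wdd N (b :: l) = (a - b) * wdd N (a :: b :: l).
Proof.
move=> H; rewrite /wdd /=.
have -> : (2 * N + 2 - (size l).+1 = (2 * N + 2 - (size l).+2).+1)%N.
  by rewrite -subSn; [rewrite subSS | rewrite addn2 in H *].
exact: hsym_dd.
Qed.

Lemma wdd_perm (S : comNzRingType) N (l : seq S) (s : seq nat) :
  perm_eq (iota 0 (size l)) s -> wdd N l = wdd N (map (nth 0 l) s).
Proof.
move=> Hp; rewrite /wdd size_map -(perm_size Hp) size_iota.
apply: hsym_perm.
rewrite -{1}(mkseq_nth 0 l) /mkseq.
exact: perm_map.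
Qed.

Lemma wdd_odd (S : comNzRingType) N (l : seq S) : (size l <= 2 * N + 2)%N ->
  wdd N (map -%R l) = (-1) ^+ (size l) * wdd N l.
Proof.
move=> H; rewrite /wdd size_map hsym_odd; congr (_ * _).
by rewrite -[LHS]signr_odd -[RHS]signr_odd oddB // oddD oddM.
Qed.

Lemma ddL (S : comNzRingType) N (a b : S) l s1 s2 s3 l1 l2 l3 :
  (size l + 2 <= 2 * N + 2)%N ->
  perm_eq (iota 0 (size l).+1) s1 -> perm_eq (iota 0 (size l).+1) s2 ->
  perm_eq (iota 0 (size l).+2) s3 ->
  l1 = map (nth 0 (a :: l)) s1 -> l2 = map (nth 0 (b :: l)) s2 ->
  l3 = map (nth 0 (a :: b :: l)) s3 ->
  wdd N l1 = wdd N l2 + (a - b) * wdd N l3.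
Proof.
move=> hs p1 p2 p3 -> -> ->.
rewrite -(wdd_perm N (l := a :: l) p1) -(wdd_perm N (l := b :: l) p2).
rewrite -(wdd_perm N (l := a :: b :: l) p3) -(wdd_dd a b hs); ring.
Qed.

Lemma ddR (S : comNzRingType) N (a b : S) l s1 s2 s3 l1 l2 l3 :
  (size l + 2 <= 2 * N + 2)%N ->
  perm_eq (iota 0 (size l).+1) s1 -> perm_eq (iota 0 (size l).+1) s2 ->
  perm_eq (iota 0 (size l).+2) s3 ->
  l1 = map (nth 0 (a :: l)) s1 -> l2 = map (nth 0 (b :: l)) s2 ->
  l3 = map (nth 0 (a :: b :: l)) s3 ->
  wdd N l2 = wdd N l1 - (a - b) * wdd N l3.
Proof.
move=> hs p1 p2 p3 e1 e2 e3; rewrite (ddL hs p1 p2 p3 e1 e2 e3); ring.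
Qed.

Lemma oddr (S : comNzRingType) N (l1 l2 : seq S) s :
  perm_eq (iota 0 (size l2)) s -> (size l2 <= 2 * N + 2)%N ->
  l1 = map -%R (map (nth 0 l2) s) -> wdd N l1 = (-1) ^+ (size l2) * wdd N l2.
Proof.
move=> p hs ->.
have hsz : size (map (nth 0 l2) s) = size l2 by rewrite size_map -(perm_size p) size_iota.
by rewrite (wdd_odd (N := N) (l := map (nth 0 l2) s)) ?hsz // -(wdd_perm N p).
Qed.

Ltac szt := rewrite /=; lia.
Ltac ddl l s1 s2 s3 := apply: (ddL (l:=l) (s1:=s1) (s2:=s2) (s3:=s3));
  [szt|by []|by []|by []|by []|by []|by []].
Ltac ddr l s1 s2 s3 := apply: (ddR (l:=l) (s1:=s1) (s2:=s2) (s3:=s3));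
  [szt|by []|by []|by []|by []|by []|by []].
Ltac oddt l2 s := apply: (oddr (l2:=l2) (s:=s)); [by []|szt|by rewrite /= ?opprK].

Section Abs.
Variable S : comNzRingType.
Variable W : seq S -> S.
Variables u v s t : S.

Lemma idpar :
 W [:: u; v; t] = W [:: u; v; -u] + (t - - u) * W [:: u; -u; v; t] ->
 W [:: u; -v; t] = W [:: u; -v; -u] + (t - - u) * W [:: u; -u; -v; t] ->
 W [:: u; -v; -u] = (-1) ^+ 3 * W [:: u; v; -u] ->
 W [:: u; v; -s] = W [:: u; v; t] + (- s - t) * W [:: u; v; -s; t] ->
 W [:: u; -s; t] = W [:: u; v; t] - (v - - s) * W [:: u; v; -s; t] ->
 W [:: u; t] = W [:: u; -s] + (t - - s) * W [:: u; -s; t] ->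
 W [:: -u; s] = (-1) ^+ 2 * W [:: u; -s] ->
 W [:: -v; t] = W [:: u; t] - (u - - v) * W [:: u; -v; t] ->
 (s + t) * (u + t) * (W [:: u; v; -s; t] + W [:: u; -u; v; t] + W [:: u; -u; -v; t])
   + W [:: -u; s] - W [:: -v; t]
 = - (u + v + s + t) * (W [:: u; v; -s] - (u + t) * (W [:: u; -u; v; t] + W [:: u; -u; -v; t])).
Proof.
move=> h1 h2 h3 h4 h5 h6 h7 h8.
rewrite h7 h8 h4 h6 h5 h1 h2 h3; ring.
Qed.

Lemma idvir :
 W [:: u; v; t] = W [:: u; -u; t] + (v - - u) * W [:: u; -u; v; t] ->
 W [:: u; -u; t] = W [:: -v; -u; t] + (u - - v) * W [:: u; -u; -v; t] ->
 W [:: -v; -u; t] = (-1) ^+ 3 * W [:: u; v; -t] ->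
 W [:: u; v; -s] = W [:: u; v; t] - (t - - s) * W [:: u; v; -s; t] ->
 W [:: -s; v] = W [:: u; v] - (u - - s) * W [:: u; v; -s] ->
 W [:: -t; u] = W [:: u; v] - (v - - t) * W [:: u; v; -t] ->
 W [:: -v; s] = (-1) ^+ 2 * W [:: -s; v] ->
 W [:: -u; t] = (-1) ^+ 2 * W [:: -t; u] ->
 (v + t) * (s + t) * (W [:: u; v; -s; t] + W [:: u; -u; v; t] + W [:: u; -u; -v; t])
 = W [:: -u; t] - W [:: -v; s]
   - (u + v + s + t) * (W [:: u; v; -s] - (v + t) * (W [:: u; -u; v; t] + W [:: u; -u; -v; t])).
Proof.
move=> h1 h2 h3 h4 h5 h6 h7 h8.
rewrite h7 h5 h8 h6 h4 h1 h2 h3; ring.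
Qed.

Lemma idvir1 :
 W [:: -u; s] = W [:: -v; s] + (- u - - v) * W [:: -u; -v; s] ->
 W [:: -u; -v; s] = (-1) ^+ 3 * W [:: u; v; -s] ->
 W [:: -u; s] - W [:: -v; s] = (u - v) * W [:: u; v; -s].
Proof. move=> h1 h2; rewrite h1 h2; ring. Qed.

Lemma idhor1 :
 W [:: u; v; t] = W [:: u; v; -u] + (t - - u) * W [:: u; -u; v; t] ->
 W [:: u; -v; t] = W [:: u; -v; -u] + (t - - u) * W [:: u; -u; -v; t] ->
 W [:: u; -v; -u] = (-1) ^+ 3 * W [:: u; v; -u] ->
 W [:: u; v; -s] = W [:: u; v; t] + (- s - t) * W [:: u; v; -s; t] ->
 W [:: u; -v; -s] = W [:: u; -v; t] + (- s - t) * W [:: u; -v; -s; t] ->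
 W [:: -u; s] = W [:: -u; v] + (s - v) * W [:: s; v; -u] ->
 W [:: s; v; -u] = (-1) ^+ 3 * W [:: u; -v; -s] ->
 W [:: -u; s] + (v + t) * W [:: u; v; -s] - (v + t) * (u + t) * (W [:: u; -u; v; t] + W [:: u; -u; -v; t])
 = W [:: -u; v] + (- (v + t) * (W [:: u; v; -s; t] + W [:: u; -v; -s; t]) - W [:: u; -v; -s]) * (s + t).
Proof.
move=> h1 h2 h3 h4 h5 h6 h7.
rewrite h6 h7 h5 h4 h1 h2 h3; ring.
Qed.

Lemma idhor3 :
 W [:: u; v; t] = W [:: u; v; -u] + (t - - u) * W [:: u; -u; v; t] ->
 W [:: u; -v; t] = W [:: u; -v; -u] + (t - - u) * W [:: u; -u; -v; t] ->
 W [:: u; -v; -u] = (-1) ^+ 3 * W [:: u; v; -u] ->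
 W [:: u; -s; t] = W [:: u; v; t] - (v - - s) * W [:: u; v; -s; t] ->
 W [:: u; -v; -s] = W [:: u; -v; t] + (- s - t) * W [:: u; -v; -s; t] ->
 W [:: -v; -s; t] = W [:: u; -s; t] - (u - - v) * W [:: u; -v; -s; t] ->
 W [:: -s; -v] = W [:: u; -v] - (u - - s) * W [:: u; -v; -s] ->
 W [:: -s; t] = W [:: -s; -v] + (t - - v) * W [:: -v; -s; t] ->
 W [:: -u; v] = (-1) ^+ 2 * W [:: u; -v] ->
 (v + t) * (u + t) * (W [:: u; v; -s; t] + W [:: u; -u; v; t] + W [:: u; -u; -v; t])
 = W [:: -s; t] - W [:: -u; v]
   - (- (v + t) * (W [:: u; v; -s; t] + W [:: u; -v; -s; t]) - W [:: u; -v; -s]) * (u + v + s + t).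
Proof.
move=> h1 h2 h3 h5 h5' h8 h9 h10 h11.
rewrite h10 h9 h8 h5' h11 h5 h1 h2 h3; ring.
Qed.

End Abs.

Section Conc.
Variable N : nat.
Hypothesis hN : (1 <= N)%N.
Local Notation x1 := (xv 1). Local Notation x2 := (xv 2).
Local Notation x3 := (xv 3). Local Notation x4 := (xv 4).

Lemma Kpar :
 (x3 + x4) * (x1 + x4) * (wdd N [:: x1; x2; - x3; x4] + wdd N [:: x1; - x1; x2; x4] + wdd N [:: x1; - x1; - x2; x4])
   + wdd N [:: - x1; x3] - wdd N [:: - x2; x4]
 = - (x1 + x2 + x3 + x4) * (wdd N [:: x1; x2; - x3] - (x1 + x4) * (wdd N [:: x1; - x1; x2; x4] + wdd N [:: x1; - x1; - x2; x4])).
Proof.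
apply: (idpar (W := wdd N)).
- ddl [:: x1; x2] [:: 1; 2; 0]%N [:: 1; 2; 0]%N [:: 2; 1; 3; 0]%N.
- ddl [:: x1; - x2] [:: 1; 2; 0]%N [:: 1; 2; 0]%N [:: 2; 1; 3; 0]%N.
- oddt [:: x1; x2; - x1] [:: 2; 1; 0]%N.
- ddl [:: x1; x2] [:: 1; 2; 0]%N [:: 1; 2; 0]%N [:: 2; 3; 0; 1]%N.
- ddr [:: x1; x4] [:: 1; 0; 2]%N [:: 1; 0; 2]%N [:: 2; 0; 1; 3]%N.
- ddl [:: x1] [:: 1; 0]%N [:: 1; 0]%N [:: 2; 1; 0]%N.
- oddt [:: x1; - x3] [:: 0; 1]%N.
- ddr [:: x4] [:: 0; 1]%N [:: 0; 1]%N [:: 0; 1; 2]%N.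
Qed.

Lemma Kvir :
 (x2 + x4) * (x3 + x4) * (wdd N [:: x1; x2; - x3; x4] + wdd N [:: x1; - x1; x2; x4] + wdd N [:: x1; - x1; - x2; x4])
 = wdd N [:: - x1; x4] - wdd N [:: - x2; x3]
   - (x1 + x2 + x3 + x4) * (wdd N [:: x1; x2; - x3] - (x2 + x4) * (wdd N [:: x1; - x1; x2; x4] + wdd N [:: x1; - x1; - x2; x4])).
Proof.
apply: (idvir (W := wdd N)).
- ddl [:: x1; x4] [:: 1; 0; 2]%N [:: 1; 0; 2]%N [:: 2; 1; 0; 3]%N.
- ddl [:: - x1; x4] [:: 0; 1; 2]%N [:: 0; 1; 2]%N [:: 0; 2; 1; 3]%N.
- oddt [:: x1; x2; - x4] [:: 1; 0; 2]%N.
- ddr [:: x1; x2] [:: 1; 2; 0]%N [:: 1; 2; 0]%N [:: 2; 3; 1; 0]%N.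
- ddr [:: x2] [:: 0; 1]%N [:: 0; 1]%N [:: 0; 2; 1]%N.
- ddr [:: x1] [:: 1; 0]%N [:: 0; 1]%N [:: 2; 0; 1]%N.
- oddt [:: - x3; x2] [:: 1; 0]%N.
- oddt [:: - x4; x1] [:: 1; 0]%N.
Qed.

Lemma Kvir1 :
 wdd N [:: - x1; x3] - wdd N [:: - x2; x3] = (x1 - x2) * wdd N [:: x1; x2; - x3].
Proof.
apply: (idvir1 (W := wdd N)).
- ddl [:: x3] [:: 0; 1]%N [:: 0; 1]%N [:: 0; 1; 2]%N.
- oddt [:: x1; x2; - x3] [:: 0; 1; 2]%N.
Qed.

Lemma Khor1 :
 wdd N [:: - x1; x3] + (x2 + x4) * wdd N [:: x1; x2; - x3]
   - (x2 + x4) * (x1 + x4) * (wdd N [:: x1; - x1; x2; x4] + wdd N [:: x1; - x1; - x2; x4])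
 = wdd N [:: - x1; x2] + (- (x2 + x4) * (wdd N [:: x1; x2; - x3; x4] + wdd N [:: x1; - x2; - x3; x4])
      - wdd N [:: x1; - x2; - x3]) * (x3 + x4).
Proof.
apply: (idhor1 (W := wdd N)).
- ddl [:: x1; x2] [:: 1; 2; 0]%N [:: 1; 2; 0]%N [:: 2; 1; 3; 0]%N.
- ddl [:: x1; - x2] [:: 1; 2; 0]%N [:: 1; 2; 0]%N [:: 2; 1; 3; 0]%N.
- oddt [:: x1; x2; - x1] [:: 2; 1; 0]%N.
- ddl [:: x1; x2] [:: 1; 2; 0]%N [:: 1; 2; 0]%N [:: 2; 3; 0; 1]%N.
- ddl [:: x1; - x2] [:: 1; 2; 0]%N [:: 1; 2; 0]%N [:: 2; 3; 0; 1]%N.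
- ddl [:: - x1] [:: 1; 0]%N [:: 1; 0]%N [:: 0; 1; 2]%N.
- oddt [:: x1; - x2; - x3] [:: 2; 1; 0]%N.
Qed.

Lemma Khor3 :
 (x2 + x4) * (x1 + x4) * (wdd N [:: x1; x2; - x3; x4] + wdd N [:: x1; - x1; x2; x4] + wdd N [:: x1; - x1; - x2; x4])
 = wdd N [:: - x3; x4] - wdd N [:: - x1; x2]
   - (- (x2 + x4) * (wdd N [:: x1; x2; - x3; x4] + wdd N [:: x1; - x2; - x3; x4])
      - wdd N [:: x1; - x2; - x3]) * (x1 + x2 + x3 + x4).
Proof.
apply: (idhor3 (W := wdd N)).
- ddl [:: x1; x2] [:: 1; 2; 0]%N [:: 1; 2; 0]%N [:: 2; 1; 3; 0]%N.
- ddl [:: x1; - x2] [:: 1; 2; 0]%N [:: 1; 2; 0]%N [:: 2; 1; 3; 0]%N.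
- oddt [:: x1; x2; - x1] [:: 2; 1; 0]%N.
- ddr [:: x1; x4] [:: 1; 0; 2]%N [:: 1; 0; 2]%N [:: 2; 0; 1; 3]%N.
- ddl [:: x1; - x2] [:: 1; 2; 0]%N [:: 1; 2; 0]%N [:: 2; 3; 0; 1]%N.
- ddr [:: - x3; x4] [:: 0; 1; 2]%N [:: 0; 1; 2]%N [:: 0; 1; 2; 3]%N.
- ddr [:: - x2] [:: 0; 1]%N [:: 0; 1]%N [:: 0; 2; 1]%N.
- ddl [:: - x3] [:: 1; 0]%N [:: 1; 0]%N [:: 1; 2; 0]%N.
- oddt [:: x1; - x2] [:: 0; 1]%N.
Qed.

End Conc.
Definition PG (S : comNzRingType) (s12 s13 s14 s23 s24 s34 : S) (j1 j2 j3 j4 i1 i2 i3 i4 : bool) : S :=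
  match j1, j2, j3, j4, i1, i2, i3, i4 with
  | false, false, false, false, false, false, false, false => (1)
  | false, false, true, true, false, false, false, false => (s34)
  | false, true, false, true, false, false, false, false => (s24)
  | false, true, true, false, false, false, false, false => (s23)
  | true, false, false, true, false, false, false, false => (s14)
  | true, false, true, false, false, false, false, false => (s13)
  | true, true, false, false, false, false, false, false => (s12)
  | true, true, true, true, false, false, false, false => (s14 * s23 - s13 * s24 + s12 * s34)
  | false, false, true, false, false, false, false, true => (1)
  | false, true, true, true, false, false, false, true => (- s24)
  | true, false, true, true, false, false, false, true => (- s14)
  | true, true, true, false, false, false, false, true => (s12)
  | false, false, false, true, false, false, true, false => (1)
  | false, true, true, true, false, false, true, false => (s23)
  | true, false, true, true, false, false, true, false => (s13)
  | true, true, false, true, false, false, true, false => (s12)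
  | false, false, true, true, false, false, true, true => (- 1)
  | true, true, true, true, false, false, true, true => (- s12)
  | false, false, true, false, false, true, false, false => (- 1)
  | false, true, true, true, false, true, false, false => (s24)
  | true, false, false, false, false, true, false, false => (1)
  | true, false, true, true, false, true, false, false => (s34 + s14)
  | true, true, false, true, false, true, false, false => (s24)
  | true, true, true, false, false, true, false, false => (s23 - s12)
  | true, false, true, false, false, true, false, true => (1)
  | true, true, true, true, false, true, false, true => (- s24)
  | false, false, true, true, false, true, true, false => (- 1)
  | true, false, false, true, false, true, true, false => (1)
  | true, true, true, true, false, true, true, false => (s23 - s12)
  | true, false, true, true, false, true, true, true => (- 1)
  | false, false, false, true, true, false, false, false => (- 1)
  | false, true, false, false, true, false, false, false => (1)
  | false, true, true, true, true, false, false, false => (s34 - s23)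
  | true, false, true, true, true, false, false, false => (- s13)
  | true, true, false, true, true, false, false, false => (- s14 - s12)
  | true, true, true, false, true, false, false, false => (- s13)
  | false, false, true, true, true, false, false, true => (1)
  | false, true, true, false, true, false, false, true => (1)
  | true, true, true, true, true, false, false, true => (s14 + s12)
  | false, true, false, true, true, false, true, false => (1)
  | true, true, true, true, true, false, true, false => (- s13)
  | false, true, true, true, true, false, true, true => (- 1)
  | false, false, true, true, true, true, false, false => (- 1)
  | false, true, true, false, true, true, false, false => (- 1)
  | true, false, false, true, true, true, false, false => (1)
  | true, true, false, false, true, true, false, false => (- 1)
  | true, true, true, true, true, true, false, false => (- s34 + s23 - s14 - s12)
  | true, false, true, true, true, true, false, true => (- 1)
  | true, true, true, false, true, true, false, true => (- 1)
  | false, true, true, true, true, true, true, false => (- 1)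
  | true, true, false, true, true, true, true, false => (- 1)
  | true, true, true, true, true, true, true, true => (1)
  | _, _, _, _, _, _, _, _ => 0 end.

Definition QG (S : comNzRingType) (s12 s13 s14 s23 s24 s34 : S) (j1 j2 j3 j4 i1 i2 i3 i4 : bool) : S :=
  match j1, j2, j3, j4, i1, i2, i3, i4 with
  | false, false, false, false, false, false, false, false => (1)
  | false, false, true, true, false, false, false, false => (s34 - s23 + s14 + s12)
  | false, true, false, true, false, false, false, false => (- s13)
  | false, true, true, false, false, false, false, false => (- s14 - s12)
  | true, false, false, true, false, false, false, false => (- s23 + s12)
  | true, false, true, false, false, false, false, false => (- s24)
  | true, true, false, false, false, false, false, false => (s12)
  | true, true, true, true, false, false, false, false => (s14 * s23 - s13 * s24 + s12 * s34)
  | false, false, true, false, false, false, false, true => (1)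
  | false, true, true, true, false, false, false, true => (s13)
  | true, false, true, true, false, false, false, true => (s23 - s12)
  | true, true, true, false, false, false, false, true => (s12)
  | false, false, false, true, false, false, true, false => (1)
  | false, true, true, true, false, false, true, false => (- s14 - s12)
  | true, false, true, true, false, false, true, false => (- s24)
  | true, true, false, true, false, false, true, false => (s12)
  | false, false, true, true, false, false, true, true => (- 1)
  | true, true, true, true, false, false, true, true => (- s12)
  | false, false, true, false, false, true, false, false => (1)
  | false, true, true, true, false, true, false, false => (s13)
  | true, false, false, false, false, true, false, false => (1)
  | true, false, true, true, false, true, false, false => (s34 + s14)
  | true, true, false, true, false, true, false, false => (- s13)
  | true, true, true, false, false, true, false, false => (- s14)
  | true, false, true, false, false, true, false, true => (1)
  | true, true, true, true, false, true, false, true => (s13)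
  | false, false, true, true, false, true, true, false => (1)
  | true, false, false, true, false, true, true, false => (1)
  | true, true, true, true, false, true, true, false => (- s14)
  | true, false, true, true, false, true, true, true => (- 1)
  | false, false, false, true, true, false, false, false => (1)
  | false, true, false, false, true, false, false, false => (1)
  | false, true, true, true, true, false, false, false => (s34 - s23)
  | true, false, true, true, true, false, false, false => (- s24)
  | true, true, false, true, true, false, false, false => (s23)
  | true, true, true, false, true, false, false, false => (s24)
  | false, false, true, true, true, false, false, true => (- 1)
  | false, true, true, false, true, false, false, true => (1)
  | true, true, true, true, true, false, false, true => (- s23)
  | false, true, false, true, true, false, true, false => (1)
  | true, true, true, true, true, false, true, false => (s24)
  | false, true, true, true, true, false, true, true => (- 1)
  | false, false, true, true, true, true, false, false => (- 1)
  | false, true, true, false, true, true, false, false => (1)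
  | true, false, false, true, true, true, false, false => (- 1)
  | true, true, false, false, true, true, false, false => (- 1)
  | true, true, true, true, true, true, false, false => (- s34)
  | true, false, true, true, true, true, false, true => (1)
  | true, true, true, false, true, true, false, true => (- 1)
  | false, true, true, true, true, true, true, false => (1)
  | true, true, false, true, true, true, true, false => (- 1)
  | true, true, true, true, true, true, true, true => (1)
  | _, _, _, _, _, _, _, _ => 0 end.

Definition PH (S : comNzRingType) (s12 s13 s14 s23 s24 s34 : S) (j1 j2 j3 j4 i1 i2 i3 i4 : bool) : S :=
  match j1, j2, j3, j4, i1, i2, i3, i4 with
  | false, false, false, false, false, false, false, false => (1)
  | false, false, true, true, false, false, false, false => (s34)
  | false, true, false, true, false, false, false, false => (s24)
  | false, true, true, false, false, false, false, false => (s23)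
  | true, false, false, true, false, false, false, false => (s14)
  | true, false, true, false, false, false, false, false => (s13)
  | true, true, false, false, false, false, false, false => (s12)
  | true, true, true, true, false, false, false, false => (s14 * s23 - s13 * s24 + s12 * s34)
  | false, false, true, false, false, false, false, true => (- 1)
  | false, true, true, true, false, false, false, true => (s24)
  | true, false, false, false, false, false, false, true => (1)
  | true, false, true, true, false, false, false, true => (s34 + s14)
  | true, true, false, true, false, false, false, true => (s24)
  | true, true, true, false, false, false, false, true => (s23 - s12)
  | false, false, false, true, false, false, true, false => (- 1)
  | false, true, false, false, false, false, true, false => (1)
  | false, true, true, true, false, false, true, false => (s34 - s23)
  | true, false, true, true, false, false, true, false => (- s13)
  | true, true, false, true, false, false, true, false => (- s14 - s12)
  | true, true, true, false, false, false, true, false => (- s13)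
  | false, false, true, true, false, false, true, true => (- 1)
  | false, true, true, false, false, false, true, true => (- 1)
  | true, false, false, true, false, false, true, true => (1)
  | true, true, false, false, false, false, true, true => (- 1)
  | true, true, true, true, false, false, true, true => (- s34 + s23 - s14 - s12)
  | false, false, true, false, false, true, false, false => (1)
  | false, true, true, true, false, true, false, false => (- s24)
  | true, false, true, true, false, true, false, false => (- s14)
  | true, true, true, false, false, true, false, false => (s12)
  | true, false, true, false, false, true, false, true => (- 1)
  | true, true, true, true, false, true, false, true => (s24)
  | false, false, true, true, false, true, true, false => (- 1)
  | false, true, true, false, false, true, true, false => (- 1)
  | true, true, true, true, false, true, true, false => (- s14 - s12)
  | true, false, true, true, false, true, true, true => (- 1)
  | true, true, true, false, false, true, true, true => (- 1)
  | false, false, false, true, true, false, false, false => (1)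
  | false, true, true, true, true, false, false, false => (s23)
  | true, false, true, true, true, false, false, false => (s13)
  | true, true, false, true, true, false, false, false => (s12)
  | false, false, true, true, true, false, false, true => (1)
  | true, false, false, true, true, false, false, true => (- 1)
  | true, true, true, true, true, false, false, true => (- s23 + s12)
  | false, true, false, true, true, false, true, false => (- 1)
  | true, true, true, true, true, false, true, false => (s13)
  | false, true, true, true, true, false, true, true => (- 1)
  | true, true, false, true, true, false, true, true => (- 1)
  | false, false, true, true, true, true, false, false => (- 1)
  | true, true, true, true, true, true, false, false => (- s12)
  | true, false, true, true, true, true, false, true => (- 1)
  | false, true, true, true, true, true, true, false => (- 1)
  | true, true, true, true, true, true, true, true => (1)
  | _, _, _, _, _, _, _, _ => 0 end.

Definition QH (S : comNzRingType) (s12 s13 s14 s23 s24 s34 : S) (j1 j2 j3 j4 i1 i2 i3 i4 : bool) : S :=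
  match j1, j2, j3, j4, i1, i2, i3, i4 with
  | false, false, false, false, false, false, false, false => (1)
  | false, false, true, true, false, false, false, false => (s12)
  | false, true, false, true, false, false, false, false => (s13)
  | false, true, true, false, false, false, false, false => (s23 - s12)
  | true, false, false, true, false, false, false, false => (s14 + s12)
  | true, false, true, false, false, false, false, false => (s24)
  | true, true, false, false, false, false, false, false => (s34 - s23 + s14 + s12)
  | true, true, true, true, false, false, false, false => (s14 * s23 - s13 * s24 + s12 * s34)
  | true, false, false, false, false, false, false, true => (1)
  | true, false, true, true, false, false, false, true => (s12)
  | true, true, false, true, false, false, false, true => (s13)
  | true, true, true, false, false, false, false, true => (s23 - s12)
  | false, true, false, false, false, false, true, false => (1)
  | false, true, true, true, false, false, true, false => (s12)
  | true, true, false, true, false, false, true, false => (- s14 - s12)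
  | true, true, true, false, false, false, true, false => (- s24)
  | true, true, false, false, false, false, true, true => (- 1)
  | true, true, true, true, false, false, true, true => (- s12)
  | false, false, true, false, false, true, false, false => (1)
  | false, true, true, true, false, true, false, false => (- s13)
  | true, false, false, false, false, true, false, false => (1)
  | true, false, true, true, false, true, false, false => (- s14)
  | true, true, false, true, false, true, false, false => (s13)
  | true, true, true, false, false, true, false, false => (s34 + s14)
  | true, false, true, false, false, true, false, true => (- 1)
  | true, true, true, true, false, true, false, true => (s13)
  | false, true, true, false, false, true, true, false => (- 1)
  | true, true, false, false, false, true, true, false => (1)
  | true, true, true, true, false, true, true, false => (- s14)
  | true, true, true, false, false, true, true, true => (- 1)
  | false, false, false, true, true, false, false, false => (1)
  | false, true, false, false, true, false, false, false => (1)
  | false, true, true, true, true, false, false, false => (s23)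
  | true, false, true, true, true, false, false, false => (s24)
  | true, true, false, true, true, false, false, false => (s34 - s23)
  | true, true, true, false, true, false, false, false => (- s24)
  | true, false, false, true, true, false, false, true => (- 1)
  | true, true, false, false, true, false, false, true => (- 1)
  | true, true, true, true, true, false, false, true => (- s23)
  | false, true, false, true, true, false, true, false => (- 1)
  | true, true, true, true, true, false, true, false => (s24)
  | true, true, false, true, true, false, true, true => (- 1)
  | false, false, true, true, true, true, false, false => (- 1)
  | false, true, true, false, true, true, false, false => (1)
  | true, false, false, true, true, true, false, false => (- 1)
  | true, true, false, false, true, true, false, false => (- 1)
  | true, true, true, true, true, true, false, false => (- s34)
  | true, false, true, true, true, true, false, true => (- 1)
  | true, true, true, false, true, true, false, true => (1)
  | false, true, true, true, true, true, true, false => (- 1)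
  | true, true, false, true, true, true, true, false => (1)
  | true, true, true, true, true, true, true, true => (1)
  | _, _, _, _, _, _, _, _ => 0 end.
Definition DKt (S : comNzRingType) (a1 a2 a3 a4 b1 b2 b3 b4 : S) (j1 j2 j3 j4 i1 i2 i3 i4 : bool) : S :=
  match j1, j2, j3, j4, i1, i2, i3, i4 with
  | false, false, false, true, false, false, false, false => (b4)
  | false, false, true, false, false, false, false, false => (b3)
  | false, true, false, false, false, false, false, false => (b2)
  | true, false, false, false, false, false, false, false => (b1)
  | false, false, false, false, false, false, false, true => (a4)
  | false, false, true, true, false, false, false, true => (b3)
  | false, true, false, true, false, false, false, true => (b2)
  | true, false, false, true, false, false, false, true => (b1)
  | false, false, false, false, false, false, true, false => (a3)
  | false, false, true, true, false, false, true, false => (- b4)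
  | false, true, true, false, false, false, true, false => (b2)
  | true, false, true, false, false, false, true, false => (b1)
  | false, false, false, true, false, false, true, true => (a3)
  | false, false, true, false, false, false, true, true => (- a4)
  | false, true, true, true, false, false, true, true => (b2)
  | true, false, true, true, false, false, true, true => (b1)
  | false, false, false, false, false, true, false, false => (a2)
  | false, true, false, true, false, true, false, false => (- b4)
  | false, true, true, false, false, true, false, false => (- b3)
  | true, true, false, false, false, true, false, false => (b1)
  | false, false, false, true, false, true, false, true => (a2)
  | false, true, false, false, false, true, false, true => (- a4)
  | false, true, true, true, false, true, false, true => (- b3)
  | true, true, false, true, false, true, false, true => (b1)
  | false, false, true, false, false, true, true, false => (a2)
  | false, true, false, false, false, true, true, false => (- a3)
  | false, true, true, true, false, true, true, false => (b4)
  | true, true, true, false, false, true, true, false => (b1)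
  | false, false, true, true, false, true, true, true => (a2)
  | false, true, false, true, false, true, true, true => (- a3)
  | false, true, true, false, false, true, true, true => (a4)
  | true, true, true, true, false, true, true, true => (b1)
  | false, false, false, false, true, false, false, false => (a1)
  | true, false, false, true, true, false, false, false => (- b4)
  | true, false, true, false, true, false, false, false => (- b3)
  | true, true, false, false, true, false, false, false => (- b2)
  | false, false, false, true, true, false, false, true => (a1)
  | true, false, false, false, true, false, false, true => (- a4)
  | true, false, true, true, true, false, false, true => (- b3)
  | true, true, false, true, true, false, false, true => (- b2)
  | false, false, true, false, true, false, true, false => (a1)
  | true, false, false, false, true, false, true, false => (- a3)
  | true, false, true, true, true, false, true, false => (b4)
  | true, true, true, false, true, false, true, false => (- b2)
  | false, false, true, true, true, false, true, true => (a1)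
  | true, false, false, true, true, false, true, true => (- a3)
  | true, false, true, false, true, false, true, true => (a4)
  | true, true, true, true, true, false, true, true => (- b2)
  | false, true, false, false, true, true, false, false => (a1)
  | true, false, false, false, true, true, false, false => (- a2)
  | true, true, false, true, true, true, false, false => (b4)
  | true, true, true, false, true, true, false, false => (b3)
  | false, true, false, true, true, true, false, true => (a1)
  | true, false, false, true, true, true, false, true => (- a2)
  | true, true, false, false, true, true, false, true => (a4)
  | true, true, true, true, true, true, false, true => (b3)
  | false, true, true, false, true, true, true, false => (a1)
  | true, false, true, false, true, true, true, false => (- a2)
  | true, true, false, false, true, true, true, false => (a3)
  | true, true, true, true, true, true, true, false => (- b4)
  | false, true, true, true, true, true, true, true => (a1)
  | true, false, true, true, true, true, true, true => (- a2)
  | true, true, false, true, true, true, true, true => (a3)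
  | true, true, true, false, true, true, true, true => (- a4)
  | _, _, _, _, _, _, _, _ => 0 end.

Definition liftM (S : comNzRingType) (f : bool -> bool -> bool -> bool -> bool -> bool -> bool -> bool -> S)
  (j i : Idx) : S :=
  match j, i with ((j1,(j2,_)),(j3,(j4,_))), ((i1,(i2,_)),(i3,(i4,_))) => f j1 j2 j3 j4 i1 i2 i3 i4 end.

Definition sumb4 (S : comNzRingType) (F : bool -> bool -> bool -> bool -> S) : S :=
  F false false false false + F false false false true + F false false true false + F false false true true +
  F false true false false + F false true false true + F false true true false + F false true true true +
  F true false false false + F true false false true + F true false true false + F true false true true +
  F true true false false + F true true false true + F true true true false + F true true true true.

Lemma sumbool (S : comNzRingType) (F : bool -> S) : \sum_(k : bool) F k = F false + F true.
Proof. by rewrite big_bool addrC. Qed.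

Lemma sum_liftM (S : comNzRingType) f g j1 j2 j3 j4 i1 i2 i3 i4 :
  \sum_(k : Idx) liftM f ((j1,(j2,tt)),(j3,(j4,tt))) k * @liftM S g k ((i1,(i2,tt)),(i3,(i4,tt)))
  = sumb4 (fun k1 k2 k3 k4 => f j1 j2 j3 j4 k1 k2 k3 k4 * g k1 k2 k3 k4 i1 i2 i3 i4).
Proof.
rewrite sum16 !sumbool /sumb4 /=.
by rewrite !addrA.
Qed.

Lemma DK (S : comNzRingType) (a1 a2 a3 a4 b1 b2 b3 b4 : S) j i :
  mfD (mf_tensor (koszul [:: (a1,b1); (a2,b2)]) (koszul [:: (a3,b3); (a4,b4)])) j i
  = liftM (DKt a1 a2 a3 a4 b1 b2 b3 b4) j i.
Proof.
move: j i => [[j1 [j2 []]] [j3 [j4 []]]] [[i1 [i2 []]] [i3 [i4 []]]].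
move: j1 j2 j3 j4 i1 i2 i3 i4; do 8 case; rewrite /=; ring.
Qed.

Ltac brute :=
  let j1 := fresh "j" in let j2 := fresh "j" in let j3 := fresh "j" in let j4 := fresh "j" in
  let i1 := fresh "i" in let i2 := fresh "i" in let i3 := fresh "i" in let i4 := fresh "i" in
  let u1 := fresh "u" in let u2 := fresh "u" in let u3 := fresh "u" in let u4 := fresh "u" in
  intros [[j1 [j2 u1]] [j3 [j4 u2]]] [[i1 [i2 u3]] [i3 [i4 u4]]];
  destruct u1, u2, u3, u4;
  (under eq_bigr do rewrite DK); (under [in RHS]eq_bigr do rewrite DK);
  rewrite ?sum_liftM;
  revert j1 j2 j3 j4 i1 i2 i3 i4; do 8 case; rewrite /sumb4 /=; ring.

Ltac brute2 :=
  let j1 := fresh "j" in let j2 := fresh "j" in let j3 := fresh "j" in let j4 := fresh "j" in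
  let i1 := fresh "i" in let i2 := fresh "i" in let i3 := fresh "i" in let i4 := fresh "i" in
  let u1 := fresh "u" in let u2 := fresh "u" in let u3 := fresh "u" in let u4 := fresh "u" in
  intros [[j1 [j2 u1]] [j3 [j4 u2]]] [[i1 [i2 u3]] [i3 [i4 u4]]];
  destruct u1, u2, u3, u4;
  rewrite sum_liftM;
  revert j1 j2 j3 j4 i1 i2 i3 i4; do 8 case; rewrite /sumb4 /=; ring.

Ltac brute_par :=
  move=> [[[] [[] []]] [[] [[] []]]] [[[] [[] []]] [[] [[] []]]] => //= _; by split.

Lemma isoG (S : comNzRingType) (a1 a2 a3 a4 b1 b2 b3 b4 s12 s13 s14 s23 s24 s34 : S) :
  mf_iso (mf_tensor (koszul [:: (a1,b1); (a2,b2)]) (koszul [:: (a3,b3); (a4,b4)]))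
         (mf_tensor (koszul [:: (a2+a4, b2 + s12*(a1+a3) + s13*a4 + s14*a3);
                                (a1+a3, b1 - s12*(a2+a4) + s23*a4 + s24*a3)])
                    (koszul [:: (a4, b4 - b2 - s13*(a2+a4) - s23*(a1+a3) + s34*a3);
                                (a3, b3 - b1 - s14*(a2+a4) - s24*(a1+a3) - s34*a4)])).
Proof.
exists (liftM (PG s12 s13 s14 s23 s24 s34)).
exists (liftM (QG s12 s13 s14 s23 s24 s34)).
split; [brute_par|brute2|brute2|brute].
Qed.

Lemma isoH (S : comNzRingType) (a1 a2 a3 a4 b1 b2 b3 b4 s12 s13 s14 s23 s24 s34 : S) :
  mf_iso (mf_tensor (koszul [:: (a1,b1); (a2,b2)]) (koszul [:: (a3,b3); (a4,b4)]))
         (mf_tensor (koszul [:: (a4+a2, b4 + s12*(a3+a1) + s13*a2 + s14*a1);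
                                (a3+a1, b3 - s12*(a4+a2) + s23*a2 + s24*a1)])
                    (koszul [:: (a2, b2 - b4 - s13*(a4+a2) - s23*(a3+a1) + s34*a1);
                                (a1, b1 - b3 - s14*(a4+a2) - s24*(a3+a1) - s34*a2)])).
Proof.
exists (liftM (PH s12 s13 s14 s23 s24 s34)).
exists (liftM (QH s12 s13 s14 s23 s24 s34)).
split; [brute_par|brute2|brute2|brute].
Qed.

Ltac rg N := (try (move: (wdd N) => ?)); ring.

Lemma GW (S : comNzRingType) (s12 s13 s14 s23 s24 s34 : S) a1 a2 a3 a4 b1 b2 b3 b4 T1 T2 T3 T4 c1 c2 c3 c4 :
  T1 = a2 + a4 -> T2 = a1 + a3 -> T3 = a4 -> T4 = a3 ->
  c1 = b2 + s12*(a1+a3) + s13*a4 + s14*a3 ->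
  c2 = b1 - s12*(a2+a4) + s23*a4 + s24*a3 ->
  c3 = b4 - b2 - s13*(a2+a4) - s23*(a1+a3) + s34*a3 ->
  c4 = b3 - b1 - s14*(a2+a4) - s24*(a1+a3) - s34*a4 ->
  mf_iso (mf_tensor (koszul [:: (a1,b1); (a2,b2)]) (koszul [:: (a3,b3); (a4,b4)]))
         (mf_tensor (koszul [:: (T1, c1); (T2, c2)]) (koszul [:: (T3, c3); (T4, c4)])).
Proof. move=> -> -> -> -> -> -> -> ->; exact: isoG. Qed.

Lemma HW (S : comNzRingType) (s12 s13 s14 s23 s24 s34 : S) a1 a2 a3 a4 b1 b2 b3 b4 T1 T2 T3 T4 c1 c2 c3 c4 :
  T1 = a4 + a2 -> T2 = a3 + a1 -> T3 = a2 -> T4 = a1 ->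
  c1 = b4 + s12*(a3+a1) + s13*a2 + s14*a1 ->
  c2 = b3 - s12*(a4+a2) + s23*a2 + s24*a1 ->
  c3 = b2 - b4 - s13*(a4+a2) - s23*(a3+a1) + s34*a1 ->
  c4 = b1 - b3 - s14*(a4+a2) - s24*(a3+a1) - s34*a2 ->
  mf_iso (mf_tensor (koszul [:: (a1,b1); (a2,b2)]) (koszul [:: (a3,b3); (a4,b4)]))
         (mf_tensor (koszul [:: (T1, c1); (T2, c2)]) (koszul [:: (T3, c3); (T4, c4)])).
Proof. move=> -> -> -> -> -> -> -> ->; exact: isoH. Qed.

Lemma Ktrick (S : comNzRingType) (L R l r : S) : l = r -> L - R = l - r -> L = R.
Proof. by move=> -> /eqP; rewrite subrr subr_eq0 => /eqP. Qed.

Lemma bcK (S T : comNzRingType) (f : S -> T) :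
  (forall x y, f (x + y) = f x + f y) -> (forall x y, f (x * y) = f x * f y) ->
  f 0 = 0 -> f 1 = 1 -> (forall x, f (- x) = - f x) -> (forall x n, f (x ^+ n) = f x ^+ n) ->
  forall a1 b1 a2 b2, mf_base_change f (koszul [:: (a1, b1); (a2, b2)])
     = koszul [:: (f a1, f b1); (f a2, f b2)].
Proof.
move=> fD fM f0 f1 fN fX a1 b1 a2 b2.
rewrite /mf_base_change /=; congr MFD.
apply: functional_extensionality => t; apply: functional_extensionality => s.
move: t s => [[] [[] []]] [[] [[] []]] /=; rewrite ?(fD, fM, f0, f1, fN, fX); ring.
Qed.

Section Phi.
Variable N : nat.
Lemma phiD x y : phi_p N (x + y) = phi_p N x + phi_p N y. Proof. by rewrite /phi_p rmorphD. Qed.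
Lemma phiM x y : phi_p N (x * y) = phi_p N x * phi_p N y. Proof. by rewrite /phi_p rmorphM. Qed.
Lemma phi0 : phi_p N 0 = 0. Proof. by rewrite /phi_p rmorph0. Qed.
Lemma phi1 : phi_p N 1 = 1. Proof. by rewrite /phi_p rmorph1. Qed.
Lemma phiN x : phi_p N (- x) = - phi_p N x. Proof. by rewrite /phi_p rmorphN. Qed.
Lemma phiX x n : phi_p N (x ^+ n) = phi_p N x ^+ n. Proof. by rewrite /phi_p rmorphXn. Qed.
Lemma phi_p1 : phi_p N p1 = xv 2 + xv 4. Proof. by rewrite /phi_p /p1 comp_mpolyXU inordK. Qed.
Lemma phi_p2 : phi_p N p2 = yv 2 + yv 4. Proof. by rewrite /phi_p /p2 comp_mpolyXU inordK. Qed.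
Lemma phi_q1 : phi_p N q1 = xv 3 + xv 4. Proof. by rewrite /phi_p /q1 comp_mpolyXU inordK. Qed.
Lemma phi_q2 : phi_p N q2 = yv 3 + yv 4. Proof. by rewrite /phi_p /q2 comp_mpolyXU inordK. Qed.
Lemma phi_r1 : phi_p N r1 = xv 1 + xv 4. Proof. by rewrite /phi_p /r1 comp_mpolyXU inordK. Qed.
Lemma phi_r2 : phi_p N r2 = yv 1 + yv 4. Proof. by rewrite /phi_p /r2 comp_mpolyXU inordK. Qed.
Lemma phi_C : phi_p N Cv = Ctilde N. Proof. by rewrite /phi_p /Cv comp_mpolyXU inordK. Qed.

Lemma tildeK a1 b1 a2 b2 : tilde N (koszul [:: (a1, b1); (a2, b2)])
   = koszul [:: (phi_p N a1, phi_p N b1); (phi_p N a2, phi_p N b2)].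
Proof. exact: (bcK phiD phiM phi0 phi1 phiN phiX). Qed.
End Phi.

Ltac phis N := rewrite ?(phiD N, phiM N, phi_p1 N, phi_p2 N, phi_q1 N, phi_q2 N, phi_r1 N, phi_r2 N, phi_C N).

Unset Implicit Arguments.

Theorem mainTheorem2 (N : nat) (hN : (1 <= N)%N) :
  [/\ mf_iso (gam_par N) (mf_tensor (Kcmn N) (tilde N gam_par_p)),
      mf_iso (gam_vir N) (mf_tensor (Kcmn N) (tilde N gam_vir_p)) &
      mf_iso (gam_hor N) (mf_tensor (Kcmn N) (tilde N gam_hor_p))].
Proof.
split.
- rewrite /gam_par /arcA /Kcmn /gam_par_p tildeK.
  apply: (GW (s12 := - yv 1)
     (s13 := wdd N [:: xv 1; xv 2; - xv 3] - (xv 1 + xv 4) * (wdd N [:: xv 1; - xv 1; xv 2; xv 4] + wdd N [:: xv 1; - xv 1; - xv 2; xv 4]))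
     (s14 := - (yv 3 + yv 4)) (s23 := - (yv 1 + yv 4)) (s24 := xv 2) (s34 := - (yv 1 + yv 2))).
  + rg N.
  + rg N.
  + phis N; rg N.
  + phis N; rg N.
  + rewrite /Acmn; rg N.
  + rewrite /Bcmn; ring.
  + phis N; rewrite /Ctilde; apply: (Ktrick (Kpar hN)); rg N.
  + phis N; rg N.
- rewrite /gam_vir /arcA /Kcmn /gam_vir_p tildeK.
  apply: (HW (s12 := - yv 2)
     (s13 := wdd N [:: xv 1; xv 2; - xv 3] - (xv 2 + xv 4) * (wdd N [:: xv 1; - xv 1; xv 2; xv 4] + wdd N [:: xv 1; - xv 1; - xv 2; xv 4]))
     (s14 := - (yv 3 + yv 4)) (s23 := - (yv 2 + yv 4)) (s24 := xv 1) (s34 := - (yv 1 + yv 2))).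
  + rg N.
  + rg N.
  + phis N; rg N.
  + phis N; rg N.
  + rewrite /Acmn; apply: (Ktrick (Kvir1 hN)); rg N.
  + rewrite /Bcmn; ring.
  + phis N; rewrite /Ctilde; apply: (Ktrick (Kvir hN)); rg N.
  + phis N; rg N.
- rewrite /gam_hor /arcA /Kcmn /gam_hor_p tildeK.
  apply: (GW (s12 := - yv 1)
     (s13 := - (xv 2 + xv 4) * (wdd N [:: xv 1; xv 2; - xv 3; xv 4] + wdd N [:: xv 1; - xv 2; - xv 3; xv 4]) - wdd N [:: xv 1; - xv 2; - xv 3])
     (s14 := - (yv 2 + yv 4)) (s23 := - (yv 1 + yv 4)) (s24 := xv 3) (s34 := - (yv 1 + yv 3))).
  + rg N.
  + rg N.
  + phis N; rg N.
  + phis N; rg N.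
  + rewrite /Acmn; apply: (Ktrick (Khor1 hN)); rg N.
  + rewrite /Bcmn; ring.
  + phis N; rewrite /Ctilde; apply: (Ktrick (Khor3 hN)); rg N.
  + phis N; rg N.
Qed.
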